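(* Let $F$ be a $4$-regular graph, let $D$ be a directed version of $F$, let $\mathbf o$ be a transitional orientation of $F$, and let $\Gamma$ be a cycle spanning set of $F-E$, where $E\subseteq E(F)$ contains at most one edge from each connected component of $F$. Then $\mathrm{CM}(F,\Gamma,D)\cdot\Delta_{D,\mathbf o}$ is a representation of $Q(F)$. This representation is strict when $|E|=c(F)$.
   Context: Graphs: $G=(V,H,E,\epsilon)$ with finite sets of vertices $V$ and half-edges $H$, a partition $E$ of $H$ into unordered pairs (edges), and $\epsilon:H\to V$; loops and multiple edges allowed. $c(G)$ is the number of connected components; $G-E'$ deletes the edges of $E'$. A directed version orders each edge as (tail, head). A single transition is an unordered pair of distinct half-edges incident with a common vertex; a directed single transition is such an ordered pair. A closed walk is a sequence $((h_1,h_2),\dots,(h_{n-1},h_n))$ of directed single transitions with $\{h_2,h_3\},\{h_4,h_5\},\dots,\{h_n,h_1\}$ edges, up to cyclic shift. $\sigma(D,W)\in\mathbb Z^{E}$ counts, at each edge, traversals by $W$ along its direction in $D$ minus traversals against it. A circuit is a nonempty closed walk using each half-edge at most once, with orientation forgotten. The cycle space of $D$ is the right null space over $\mathbb Q$ of its vertex-edge incidence matrix. A cycle basis is a set $B$ of closed walks such that the $\sigma(D,W)$, $W\in B$, are pairwise distinct and form a basis of the cycle space; a cycle spanning set is a set of closed walks containing a cycle basis. $\mathrm{CM}(G,\Gamma,D)$ is the $\Gamma\times E(G)$ matrix with row $\sigma(D,W)$ for $W\in\Gamma$. $F$ is $4$-regular if every vertex is incident with exactly $4$ half-edges. A transition at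 $v$ is a partition of the four half-edges at $v$ into two single transitions; $\mathfrak T(F)$ is the set of transitions. A circuit partition $P$ is a set of circuits such that every half-edge lies in exactly one single transition of exactly one circuit of $P$; $\tau(P)$ is the set of transitions both of whose single transitions occur in circuits of $P$; each set containing exactly one transition at every vertex equals $\tau(P)$ for a unique $P$. A transitional orientation $\mathbf o$ assigns to each transition $t$ one of its two single transitions $\mathbf o(t)$. $\Delta_{D,\mathbf o}$ is the $E(F)\times\mathfrak T(F)$ matrix over $\mathbb Q$ whose $(e,t)$ entry is $1$ if $e\cap\mathbf o(t)=\{h\}$ with $h$ the tail of $e$ in $D$, $-1$ if $e\cap\mathbf o(t)=\{h\}$ with $h$ the head, and $0$ otherwise. Multimatroids: for a partition $\Omega$ of a finite set $U$ (skew classes), a transversal meets every skew class in exactly one element; a subtransversal is a subset of a transversal. A multimatroid $(U,\Omega,r)$ has $r$ from subtransversals to $\mathbb N$ such that on each subtransversal $S$, $r$ is a matroid rank function, and for $x\ne y$ in a skew class disjoint from $S$, $\max\{r(S\cup\{x\}),r(S\cup\{y\})\}>r(S)$. A representation is a matrix with columns indexed by $U$ such that the rank of the columns in any subtransversal $S$ equals $r(S)$; it is strict if the matrix rank equals $\max r$. The Eulerian $3$-matroid $Q(F)$ is the unique multimatroid $(\mathfrak T(F),\Omega,r)$ whose skew classes are the sets of three transitions at each vertex and such that for every transversal $T=\tau(P)$, $r(T)=|V(F)|-(|P|-c(F))$. *)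

(* Defs.v *)
From HB Require Import structures.
From mathcomp Require Import all_boot all_order all_algebra.
Set Implicit Arguments. Unset Strict Implicit. Unset Printing Implicit Defensive.
Import GRing.Theory Num.Theory.

(* A graph G = (V, H, E, eps): finite vertex set gV, finite half-edge set gH,
   the partition E of gH into unordered pairs is encoded by the fixed-point
   free involution [mate] (the edges are the pairs {h, mate h}). *)
Record graph := Graph {
  gV : finType;
  gH : finType;
  mate : gH -> gH;
  eps : gH -> gV;
  mate_invol : involutive mate;
  mate_nofix : forall h, mate h != h }.

Section GraphDefs.
Variable G : graph.
Local Notation V := (gV G).
Local Notation H := (gH G).
Local Open Scope ring_scope.

Definition adj : rel V := fun u v => [exists h : H, (eps h == u) && (eps (mate h) == v)].
Definition ncomp : nat := #|[set [set w | connect adj v w] | v : V]|.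

Definition four_regular : Prop := forall v : V, #|[set h : H | eps h == v]| = 4.

Definition edge_set : {set {set H}} := [set [set h; mate h] | h : H].
Definition edge := {e : {set H} | e \in edge_set}.

(* a directed version: tl h = true iff h is the tail of its edge *)
Definition directed (tl : H -> bool) : Prop := forall h, tl (mate h) = ~~ tl h.

(* closed walks: a nonempty sequence of directed single transitions
   (h1,h2),...,(h_{n-1},h_n) with {h2,h3},...,{hn,h1} edges *)
Definition walk := seq (H * H).
Definition single_ok (p : H * H) : bool := (p.1 != p.2) && (eps p.1 == eps p.2).
Definition closed_walk (w : walk) : bool :=
  [&& w != [::], all single_ok w & cycle (fun p q : H * H => q.1 == mate p.2) w].

(* closed walk of G - E' : uses no half-edge of a deleted edge *)
Definition avoids (E' : {set edge}) (w : walk) : bool :=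
  all (fun p : H * H => [forall e in E', (p.1 \notin val e) && (p.2 \notin val e)]) w.

(* sigma(D,W) : traversal of edge {b_j, a_{j+1}} = {b_j, mate b_j} from b_j *)
Definition sigma (tl : H -> bool) (w : walk) (e : edge) : rat :=
  (\sum_(p <- w | p.2 \in val e) (if tl p.2 then 1 else -1))%R.

(* vertex-edge incidence matrix of D (loops give 0) *)
Definition inc (tl : H -> bool) (v : V) (e : edge) : rat :=
  (\sum_(h in val e | eps h == v) (if tl h then 1 else -1))%R.

(* the cycle space of D - E', with vectors of Q^{E(G) \ E'} extended by 0 on E' *)
Definition cycvec (tl : H -> bool) (E' : {set edge}) (x : edge -> rat) : Prop :=
  (forall e, e \in E' -> x e = 0%R) /\
  (forall v : V, (\sum_(e in [set e | e \notin E']) inc tl v e * x e)%R = 0%R).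

Definition rowv (x : edge -> rat) : 'rV[rat]_#|{: edge}| := \row_k x (enum_val k).

Definition cycle_basis (tl : H -> bool) (E' : {set edge}) (I : finType)
    (w : I -> walk) (B : {set I}) : Prop :=
  (forall i, i \in B -> closed_walk (w i) && avoids E' (w i)) /\
  (forall i j, i \in B -> j \in B -> i != j ->
      rowv (sigma tl (w i)) <> rowv (sigma tl (w j))) /\
  (forall i, i \in B -> cycvec tl E' (sigma tl (w i))) /\
  row_free (\matrix_(k < #|B|) rowv (sigma tl (w (enum_val k)))) /\
  (forall x, cycvec tl E' x ->
      (rowv x <= \matrix_(k < #|B|) rowv (sigma tl (w (enum_val k))))%MS).

(* Gamma = {w i | i in I} is a cycle spanning set of D - E' (a set of closed
   walks, each considered up to cyclic shift) *)
Definition cycle_spanning_set (tl : H -> bool) (E' : {set edge}) (I : finType)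
    (w : I -> walk) : Prop :=
  (forall i, closed_walk (w i) && avoids E' (w i)) /\
  (forall i j, i != j -> forall k, w j != rot k (w i)) /\
  (exists B : {set I}, cycle_basis tl E' w B).

Definition is_trans (P : {set {set H}}) : bool :=
  [exists v : V, partition P [set h | eps h == v] && [forall B in P, #|B| == 2]].
Definition trans := {P : {set {set H}} | is_trans P}.
Definition trans_at (v : V) (t : trans) : bool := cover (val t) == [set h | eps h == v].

Definition trans_orientation (o : trans -> {set H}) : Prop := forall t, o t \in val t.

Definition Delta (tl : H -> bool) (o : trans -> {set H}) (e : edge) (t : trans) : rat :=
  if #|val e :&: o t| == 1%N then
    (\sum_(h in val e :&: o t) (if tl h then 1 else -1))%R
  else 0%R.

Definition halfedges (w : walk) : seq H := flatten [seq [:: p.1; p.2] | p <- w].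
Definition circuit (w : walk) : bool := closed_walk w && uniq (halfedges w).
Definition circuit_partition (ps : seq walk) : Prop :=
  all circuit ps /\
  forall h : H, (\sum_(w <- ps) count (fun p : H * H => (p.1 == h) || (p.2 == h)) w = 1)%N.
Definition tau (ps : seq walk) : {set trans} :=
  [set t : trans | [forall B in val t,
      has (fun w : walk => has (fun p : H * H => [set p.1; p.2] == B) w) ps]].

(* multimatroids with ground set trans and skew classes {t | trans_at v t} *)
Definition subtransversal (S : {set trans}) : bool :=
  [forall v : V, (#|[set t in S | trans_at v t]| <= 1)%N].

Definition multimatroid (r : {set trans} -> nat) : Prop :=
  (forall S, subtransversal S -> forall X Y : {set trans}, X \subset S -> Y \subset S ->
     [/\ (r X <= #|X|)%N, (X \subset Y -> (r X <= r Y)%N) & (r (X :|: Y) + r (X :&: Y) <= r X + r Y)%N])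
  /\
  (forall S (v : V) (x y : trans), subtransversal S ->
     (forall t, t \in S -> ~~ trans_at v t) -> trans_at v x -> trans_at v y -> x != y ->
     (r S < maxn (r (x |: S)) (r (y |: S)))%N).

(* r is (the rank function of) the Eulerian 3-matroid Q(G):
   r(tau(P)) = |V| - (|P| - c(G)) for every circuit partition P *)
Definition is_Q (r : {set trans} -> nat) : Prop :=
  multimatroid r /\
  forall ps, circuit_partition ps -> (r (tau ps) + size ps = #|V| + ncomp)%N.

Definition colv (I : finType) (M : I -> trans -> rat) (t : trans) : 'rV[rat]_#|{: I}| :=
  \row_k M (enum_val k) t.
Definition crank (I : finType) (M : I -> trans -> rat) (S : {set trans}) : nat :=
  \rank (\matrix_(k < #|S|) colv M (enum_val k)).
Definition represents (I : finType) (M : I -> trans -> rat) (r : {set trans} -> nat) : Prop :=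
  forall S, subtransversal S -> crank M S = r S.
Definition strict_rep (I : finType) (M : I -> trans -> rat) (r : {set trans} -> nat) : Prop :=
  crank M setT = (\max_(S : {set trans} | subtransversal S) r S)%N.

Definition CMDelta (tl : H -> bool) (o : trans -> {set H}) (I : finType) (w : I -> walk)
    (i : I) (t : trans) : rat :=
  (\sum_(e : edge) sigma tl (w i) e * Delta tl o e t)%R.

End GraphDefs.

(* Main.v *)
Require Import Defs.
From HB Require Import structures.
From mathcomp Require Import all_boot all_order all_algebra.
From mathcomp Require Import zify ring lra.
Set Implicit Arguments. Unset Strict Implicit. Unset Printing Implicit Defensive.

Module P1.
Import GRing.Theory Num.Theory.
Local Open Scope ring_scope.

Section Basic.
Variable F : graph.
Local Notation V := (gV F).
Local Notation H := (gH F).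
Variable tl : H -> bool.
Hypothesis dir : directed tl.

Lemma edge_ofP (h : H) : [set h; mate h] \in edge_set F.
Proof. by apply/imsetP; exists h. Qed.
Definition edge_of (h : H) : edge F := @exist _ (fun e => e \in edge_set F) _ (edge_ofP h).

Lemma edge_of_mate h : edge_of (mate h) = edge_of h.
Proof. by apply: val_inj => /=; rewrite mate_invol setUC. Qed.

Lemma edge_exists (e : edge F) : exists h, e = edge_of h.
Proof.
case: e => E' HE; have := HE; move=> /imsetP [h0 _ E0]; exists h0; apply: val_inj => /=.
by rewrite E0.
Qed.

Lemma mem_edge (h : H) (e : edge F) : (h \in val e) = (e == edge_of h).
Proof.
apply/idP/eqP; last by move=> ->; rewrite /= !inE eqxx.
have [h0 ->] := edge_exists e.
rewrite !inE => /orP[/eqP->|/eqP->] //.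
by rewrite edge_of_mate.
Qed.

Definition sgn (h : H) : rat := if tl h then 1 else -1.
Lemma sgn_mate h : sgn (mate h) = - sgn h.
Proof. by rewrite /sgn dir; case: (tl h) => /=; rewrite ?opprK. Qed.
Lemma sgn2 h : sgn h * sgn h = 1.
Proof. by rewrite /sgn; case: (tl h); rewrite ?mulr1 ?mulrNN ?mulr1. Qed.

Definition fl (x : edge F -> rat) (h : H) : rat := sgn h * x (edge_of h).
Lemma fl_mate x h : fl x (mate h) = - fl x h.
Proof. by rewrite /fl sgn_mate edge_of_mate mulNr. Qed.
Lemma fl_inv x h : x (edge_of h) = sgn h * fl x h.
Proof. by rewrite /fl mulrA sgn2 mul1r. Qed.

Lemma sum_edges (P : pred H) (G : edge F -> H -> rat) :
  \sum_(e : edge F) \sum_(h in val e | P h) G e h = \sum_(h | P h) G (edge_of h) h.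
Proof.
rewrite (exchange_big_dep P) /=; last by move=> e h _ /andP[].
apply: eq_bigr => h Ph; rewrite (big_pred1 (edge_of h)) // => e /=.
by rewrite -mem_edge Ph andbT.
Qed.

Lemma sum_edge_sgn (e : edge F) : \sum_(h in val e) sgn h = 0.
Proof.
have [h ->] := edge_exists e; rewrite /= big_setU1 /=; last first.
  by rewrite inE eq_sym mate_nofix.
by rewrite big_set1 sgn_mate addrN.
Qed.

Variable o : trans F -> {set H}.

Lemma Delta_sum e t : Delta tl o e t = \sum_(h in val e :&: o t) sgn h.
Proof.
rewrite /Delta; case: ifP => // /negbT hne.
have [h Eh] := edge_exists e.
have ce : #|val e| = 2%N by rewrite Eh /= cards2 eq_sym mate_nofix.
have : (#|val e :&: o t| <= 2)%N by rewrite -ce subset_leq_card // subsetIl.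
case: (posnP #|val e :&: o t|) => [/eqP|]; first by rewrite cards_eq0 => /eqP ->; rewrite big_set0.
move=> c0 c2.
have c22 : #|val e :&: o t| = 2%N.
  by move: hne c0 c2; case: #|_| => [|[|[|]]].
have -> : val e :&: o t = val e.
  by apply/eqP; rewrite eqEcard subsetIl ce c22 /=.
by have := sum_edge_sgn e; rewrite /sgn.
Qed.

Definition phi t (x : edge F -> rat) : rat := \sum_(e : edge F) x e * Delta tl o e t.

Lemma phiE t x : phi t x = \sum_(h in o t) fl x h.
Proof.
rewrite /phi; under eq_bigr do rewrite Delta_sum mulr_sumr.
transitivity (\sum_(e : edge F) \sum_(h in val e | h \in o t) x e * sgn h).
  apply: eq_bigr => e _; apply: eq_bigl => h; by rewrite inE.
rewrite (sum_edges (mem (o t)) (fun e h => x e * sgn h)).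
apply: eq_bigr => h _; by rewrite mulrC.
Qed.

Definition bal (v : V) (x : edge F -> rat) : rat := \sum_(h | eps h == v) fl x h.

Lemma inc_sum v x : \sum_(e : edge F) inc tl v e * x e = bal v x.
Proof.
rewrite /bal /inc; under eq_bigr do rewrite mulr_suml.
rewrite (sum_edges (fun h => eps h == v) (fun e h => (if tl h then 1 else -1) * x e)).
by apply: eq_bigr => h _; rewrite /fl /sgn.
Qed.

Lemma cyc_full (E' : {set edge F}) x v : (forall e, e \in E' -> x e = 0) ->
  \sum_(e in [set e | e \notin E']) inc tl v e * x e = bal v x.
Proof.
move=> xE; rewrite -inc_sum [RHS](bigID (fun e => e \in E')) /=.
rewrite [X in _ = X + _]big1 ?add0r; last by move=> e /xE ->; rewrite mulr0.
by apply: eq_bigl => e; rewrite inE.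
Qed.

Lemma cycvec_bal (E' : {set edge F}) x v : cycvec tl E' x -> bal v x = 0.
Proof. by case=> xE xv; rewrite -(cyc_full v xE) xv. Qed.

Lemma sum_cond_const (T : Type) (r : seq T) (P : pred T) (c : rat) :
  \sum_(p <- r | P p) c = (count P r)%:R * c.
Proof.
elim: r => [|a r IH]; first by rewrite big_nil mul0r.
by rewrite big_cons /= IH; case: (P a); rewrite /= ?add0n // natrD mulrDl mul1r.
Qed.

Lemma path_map_mate (a : H * H) (s : seq (H * H)) :
  path (fun p q : H * H => q.1 == mate p.2) a s ->
  map fst s = map (fun p => mate p.2) (belast a s).
Proof.
elim: s a => [|b s IH] a //= /andP[/eqP -> Hp].
by rewrite (IH _ Hp).
Qed.

Lemma closed_count (w : walk F) (h : H) : closed_walk w ->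
  count (fun p => p.2 == mate h) w = count (fun p => p.1 == h) w.
Proof.
rewrite /closed_walk; case: w => [|p0 ws] // /and3P [_ _ Hc].
have Hm := path_map_mate Hc; rewrite belast_rcons in Hm.
have e1 : count (fun p : H * H => p.2 == mate h) (p0 :: ws) =
          count (pred1 h) (map (fun p => mate p.2) (p0 :: ws)).
  rewrite count_map; apply: eq_count => p /=.
  apply/eqP/eqP => [->|<-]; by rewrite mate_invol.
have e2 : count (fun p : H * H => p.1 == h) (p0 :: ws) =
          count (pred1 h) (map fst (rcons ws p0)).
  by rewrite count_map -rot1_cons; apply/permP; rewrite perm_sym perm_rot perm_refl.
by rewrite e1 e2 Hm.
Qed.

Lemma fl_sigma (w : walk F) h : closed_walk w ->
  fl (sigma tl w) h = (count (fun p => p.2 == h) w)%:R - (count (fun p => p.1 == h) w)%:R.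
Proof.
move=> cw; rewrite /fl /sigma /= big_mkcond /=.
have nm : mate h != h by rewrite mate_nofix.
rewrite (eq_bigr (fun p => (if p.2 == h then sgn h else 0) + (if p.2 == mate h then sgn (mate h) else 0))); last first.
  move=> p _; rewrite !inE; case: (eqVneq p.2 h) => [->|ne] /=.
    by rewrite ?eqxx eq_sym (negbTE nm) addr0 /sgn.
  case: (eqVneq p.2 (mate h)) => [->|ne2] /=; by rewrite ?add0r ?addr0 /sgn.
rewrite big_split /= -!big_mkcond /= !sum_cond_const closed_count // sgn_mate.
set c1 := (count _ w)%:R; set c2 := (count _ w)%:R.
transitivity ((c1 - c2) * (sgn h * sgn h)); first by ring.
by rewrite sgn2 mulr1.
Qed.

Lemma sum_count (r : seq (H * H)) (f : H * H -> H) (P : pred H) :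
  \sum_(h | P h) ((count (fun p => f p == h) r)%:R : rat) = (count (fun p => P (f p)) r)%:R.
Proof.
elim: r => [|p r IH] /=; first by rewrite big1.
under eq_bigr do rewrite natrD.
rewrite big_split /= IH natrD; congr (_ + _).
case: (boolP (P (f p))) => Pf.
  rewrite (bigD1 (f p)) //= eqxx big1 ?addr0 // => h /andP[_ hne].
  by rewrite eq_sym (negbTE hne).
by rewrite big1 // => h Ph; case: (eqVneq (f p) h) => // e; rewrite e Ph in Pf.
Qed.

Lemma bal_closed v (w : walk F) : closed_walk w -> bal v (sigma tl w) = 0.
Proof.
move=> cw; rewrite /bal; under eq_bigr do rewrite fl_sigma //.
rewrite sumrB (sum_count w snd (fun h => eps h == v)) (sum_count w fst (fun h => eps h == v)).
suff -> : count (fun p : H * H => eps p.2 == v) w = count (fun p : H * H => eps p.1 == v) w by rewrite subrr.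
apply: eq_in_count => p pw; move: cw => /and3P [_ /allP /(_ p pw) /andP [_ /eqP ->] _].
by [].
Qed.

Lemma sigma_avoid (E' : {set edge F}) (w : walk F) e : avoids E' w -> e \in E' -> sigma tl w e = 0.
Proof.
move=> /allP av eE; rewrite /sigma big1_seq // => p /andP [pe pw].
by move: (av p pw) => /forallP /(_ e); rewrite eE pe andbF.
Qed.

Lemma cycvec_walk (E' : {set edge F}) (w : walk F) :
  closed_walk w -> avoids E' w -> cycvec tl E' (sigma tl w).
Proof.
move=> cw av; split; first by move=> e; exact: sigma_avoid.
by move=> v; rewrite cyc_full ?bal_closed // => e; exact: sigma_avoid.
Qed.

Definition lin (a : rat) (x : edge F -> rat) (b : rat) (y : edge F -> rat) :=
  fun e => a * x e + b * y e.

Lemma fl_lin a x b y h : fl (lin a x b y) h = a * fl x h + b * fl y h.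
Proof. by rewrite /fl /lin mulrDr !mulrA ![sgn h * _]mulrC. Qed.

Lemma phi_lin t a x b y : phi t (lin a x b y) = a * phi t x + b * phi t y.
Proof.
rewrite !phiE; under eq_bigr do rewrite fl_lin.
by rewrite big_split /= -!mulr_sumr.
Qed.

Lemma bal_lin v a x b y : bal v (lin a x b y) = a * bal v x + b * bal v y.
Proof.
rewrite /bal; under eq_bigr do rewrite fl_lin.
by rewrite big_split /= -!mulr_sumr.
Qed.

Lemma cycvec_lin (E' : {set edge F}) a x b y :
  cycvec tl E' x -> cycvec tl E' y -> cycvec tl E' (lin a x b y).
Proof.
move=> cx cy; have [xE _] := cx; have [yE _] := cy.
have lE : forall e, e \in E' -> lin a x b y e = 0.
  by move=> e eE; rewrite /lin xE // yE // !mulr0 addr0.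
split => // v; rewrite cyc_full // bal_lin (cycvec_bal v cx) (cycvec_bal v cy).
by rewrite !mulr0 addr0.
Qed.

End Basic.

End P1.
Import P1.

Module P2.

Section Trans.
Variable F : graph.
Local Notation V := (gV F).
Local Notation H := (gH F).
Hypothesis F4 : four_regular F.

Definition Hv (v : V) : {set H} := [set h | eps h == v].
Lemma card_Hv v : #|Hv v| = 4. Proof. exact: F4. Qed.
Lemma in_Hv v h : (h \in Hv v) = (eps h == v). Proof. by rewrite inE. Qed.

Lemma Hv_inj v u : Hv v = Hv u -> v = u.
Proof.
move=> E; have : (0 < #|Hv v|)%N by rewrite card_Hv.
case/card_gt0P => h hv; have := hv; rewrite E !inE => /eqP <-.
by move: hv; rewrite inE => /eqP.
Qed.

Lemma trans_props (t : trans F) v : trans_at v t ->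
  partition (val t) (Hv v) /\ forall B, B \in val t -> #|B| = 2.
Proof.
rewrite /trans_at => /eqP cv; have := valP t; rewrite /is_trans => /existsP [u /andP [pt /forallP c2]].
have cu : cover (val t) = Hv u by move: pt => /and3P [/eqP -> _ _].
have uv : u = v by apply: Hv_inj; rewrite -cu cv.
subst u; split => // B BP; by move: (c2 B); rewrite BP => /eqP.
Qed.

Lemma trans_vertex (t : trans F) : exists v, trans_at v t.
Proof.
have := valP t; rewrite /is_trans => /existsP [u /andP [pt _]].
by exists u; move: pt => /and3P [cu _ _].
Qed.

Lemma trans_at_uniq (t : trans F) v u : trans_at v t -> trans_at u t -> v = u.
Proof. rewrite /trans_at => /eqP E1 /eqP E2; apply: Hv_inj; by rewrite /Hv -E1 -E2. Qed.

Lemma block_sub (t : trans F) v B : trans_at v t -> B \in val t -> B \subset Hv v.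
Proof.
move=> tv BP; have [/and3P [/eqP cv _ _] _] := trans_props tv.
by rewrite -cv; apply: bigcup_sup.
Qed.

Lemma block_other (t : trans F) v B B' : trans_at v t -> B \in val t -> B' \in val t ->
  B' = B \/ B' = Hv v :\: B.
Proof.
move=> tv BP B'P; have [/and3P [/eqP cv tI _] c2] := trans_props tv.
case: (eqVneq B' B) => [->|ne]; [by left|right].
have dj : [disjoint B' & B] by move/trivIsetP: tI; apply.
apply/eqP; rewrite eqEcard; apply/andP; split.
  apply/subsetP => h hB'; rewrite inE; apply/andP; split.
    by move: (disjointFr dj hB') => ->.
  by move: (subsetP (block_sub tv B'P) h hB').
rewrite cardsD card_Hv (c2 B') //.
by move/setIidPr: (block_sub tv BP) => ->; rewrite (c2 B).
Qed.

Lemma block_compl (t : trans F) v B : trans_at v t -> B \in val t -> Hv v :\: B \in val t.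
Proof.
move=> tv BP; have [/and3P [/eqP cv tI n0] c2] := trans_props tv.
have : (0 < #|Hv v :\: B|)%N.
  by rewrite cardsD card_Hv; move/setIidPr: (block_sub tv BP) => ->; rewrite c2.
case/card_gt0P => h; rewrite inE => /andP [hB hv].
have hc : h \in cover (val t) by rewrite cv.
have := pblock_mem hc; have := mem_pblock (val t) h; rewrite hc => hp pP.
case: (block_other tv BP pP) => [E|<-] //.
by rewrite E in hp; rewrite hp in hB.
Qed.

Lemma trans_val (t : trans F) v B : trans_at v t -> B \in val t -> val t = [set B; Hv v :\: B].
Proof.
move=> tv BP; apply/setP => B'; rewrite !inE; apply/idP/idP.
  by move=> B'P; case: (block_other tv BP B'P) => ->; rewrite eqxx ?orbT.
by case/orP => /eqP ->; [|apply: block_compl].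
Qed.

Lemma trans_eq (t t' : trans F) v B : trans_at v t -> trans_at v t' ->
  B \in val t -> B \in val t' -> t = t'.
Proof.
move=> tv t'v B1 B2; apply: val_inj; by rewrite (trans_val tv B1) (trans_val t'v B2).
Qed.

Definition partner (t : trans F) (y : H) : H := odflt y [pick z in pblock (val t) y :\ y].

Lemma partner_eq (t : trans F) v y z : trans_at v t -> [set y; z] \in val t -> y != z ->
  partner t y = z.
Proof.
move=> tv BP yz; have [/and3P [_ tI _] _] := trans_props tv.
rewrite /partner (def_pblock tI BP) ?inE ?eqxx //.
case: pickP => [z' /=|none] /=.
  by rewrite !inE => /andP [nz /orP [/eqP E|/eqP ->]] //; rewrite E eqxx in nz.
by move: (none z); rewrite !inE eqxx orbT eq_sym yz.
Qed.

Lemma partner_ex (t : trans F) v y : trans_at v t -> eps y = v ->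
  exists z, y != z /\ [set y; z] \in val t.
Proof.
move=> tv ey; have [/and3P [/eqP cv tI _] c2] := trans_props tv.
have hc : y \in cover (val t) by rewrite cv inE ey.
have pP := pblock_mem hc; have := mem_pblock (val t) y; rewrite hc => yp.
have := c2 _ pP => /eqP /cards2P [a [b [ab Eab]]].
move: yp; rewrite Eab !inE => /orP [/eqP ->|/eqP ->].
  by exists b; rewrite -Eab.
by exists a; rewrite eq_sym setUC -Eab.
Qed.

Lemma partnerP (t : trans F) v y : trans_at v t -> eps y = v ->
  [/\ partner t y != y, eps (partner t y) = v, [set y; partner t y] \in val t
    & partner t (partner t y) = y].
Proof.
move=> tv ey; have [z [yz BP]] := partner_ex tv ey.
have pz := partner_eq tv BP yz; rewrite pz; split => //.
- by rewrite eq_sym.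
- have := subsetP (block_sub tv BP) z; rewrite !inE eqxx orbT => /(_ isT) /eqP //.
- by apply: (partner_eq tv); rewrite 1?setUC // eq_sym.
Qed.

Lemma mk_trans v y y' : eps y = v -> eps y' = v -> y != y' ->
  exists t : trans F, trans_at v t /\ [set y; y'] \in val t.
Proof.
move=> ey ey' yy.
set B := [set y; y']; set P := [set B; Hv v :\: B].
have Bs : B \subset Hv v by apply/subsetP => h; rewrite !inE => /orP [] /eqP ->; rewrite ?ey ?ey'.
have cB : #|B| = 2 by rewrite cards2 yy.
have cB' : #|Hv v :\: B| = 2 by rewrite cardsD card_Hv; move/setIidPr: Bs => ->; rewrite cB.
have BB' : B != Hv v :\: B.
  by apply/eqP => /setP /(_ y); rewrite !inE eqxx.
have cP : cover P = Hv v.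
  apply/setP => h; apply/bigcupP/idP => [[C]|hv].
    rewrite !inE => /orP [/eqP ->|/eqP ->] hC; first by have := subsetP Bs h hC; rewrite inE.
    by move: hC; rewrite !inE => /andP [].
  case: (boolP (h \in B)) => hB; first by exists B; rewrite // !inE eqxx.
  exists (Hv v :\: B); first by rewrite !inE eqxx orbT.
  by rewrite in_setD hB hv.
have Pt : is_trans P.
  apply/existsP; exists v; apply/andP; split.
    apply/and3P; split; first by rewrite cP.
      apply/trivIsetP => C D; rewrite !inE => /orP [] /eqP -> /orP [] /eqP -> //; rewrite ?eqxx // => _.
        by rewrite disjoint_subset; apply/subsetP => h hB; rewrite inE /= in_setD hB.
      by rewrite disjoint_subset; apply/subsetP => h; rewrite in_setD => /andP [hB _]; rewrite inE /=.
    rewrite !inE negb_or; apply/andP; split; apply/eqP => E.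
      by move: cB; rewrite -E cards0.
    by move: cB'; rewrite -E cards0.
  apply/forallP => C; apply/implyP; rewrite !inE => /orP [] /eqP ->; by rewrite ?cB ?cB'.
exists (exist _ P Pt); split; last by rewrite /= !inE eqxx.
by rewrite /trans_at /= cP.
Qed.

Lemma trans_exists v : exists t : trans F, trans_at v t.
Proof.
have : (1 < #|Hv v|)%N by rewrite card_Hv.
case/card_gt1P => y [y' [yv y'v yy]].
rewrite !inE in yv y'v.
by have [t [tv _]] := mk_trans (eqP yv) (eqP y'v) yy; exists t.
Qed.

Lemma trans_other v (t : trans F) : trans_at v t -> exists t' : trans F, trans_at v t' /\ t' != t.
Proof.
move=> tv; have : (2 < #|Hv v|)%N by rewrite card_Hv.
case/card_gt2P => a [b [c [[av bv cv] [ab bc ca]]]]; rewrite !inE in av bv cv.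
have [t1 [t1v B1]] := mk_trans (eqP av) (eqP bv) ab.
have ac : a != c by rewrite eq_sym.
have [t2 [t2v B2]] := mk_trans (eqP av) (eqP cv) ac.
have t12 : t1 != t2.
  apply/eqP => E; subst t2.
  have [/and3P [_ tI _] _] := trans_props t1v.
  have e1 : pblock (val t1) a = [set a; b] by apply: def_pblock => //; rewrite !inE eqxx.
  have e2 : pblock (val t1) a = [set a; c] by apply: def_pblock => //; rewrite !inE eqxx.
  rewrite e1 in e2; move: e2.
  move/setP => /(_ b); rewrite !inE eqxx orbT eq_sym (negbTE ab) /= => /esym /eqP E.
  by rewrite E eqxx in bc.
case: (eqVneq t1 t) => [E|ne]; last by exists t1.
by exists t2; split => //; rewrite -E eq_sym.
Qed.

End Trans.

End P2.
Import P2.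

Module P3.

Section Perm.
Variable F : graph.
Local Notation V := (gV F).
Local Notation H := (gH F).
Hypothesis F4 : four_regular F.
Variable tau0 : V -> trans F.
Hypothesis Htau : forall u, trans_at u (tau0 u).

Definition sg (y : H) : H := partner (tau0 (eps y)) y.

Lemma sgP y : [/\ sg y != y, eps (sg y) = eps y, [set y; sg y] \in val (tau0 (eps y))
    & partner (tau0 (eps y)) (sg y) = y].
Proof. exact: (partnerP F4 (Htau (eps y))). Qed.

Lemma sg_neq y : sg y != y. Proof. by case: (sgP y). Qed.
Lemma eps_sg y : eps (sg y) = eps y. Proof. by case: (sgP y). Qed.
Lemma sgK : involutive sg.
Proof. move=> y; rewrite /sg eps_sg; by case: (sgP y). Qed.
Lemma sg_inj : injective sg. Proof. exact: (can_inj sgK). Qed.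
Lemma sg_block y : [set y; sg y] \in val (tau0 (eps y)). Proof. by case: (sgP y). Qed.

Lemma block_pair u B : B \in val (tau0 u) -> exists a, eps a = u /\ B = [set a; sg a].
Proof.
move=> BP; have [_ c2] := trans_props F4 (Htau u).
have := c2 _ BP => /eqP /cards2P [a [b [ab Eab]]].
have au : eps a = u.
  by have := subsetP (block_sub F4 (Htau u) BP) a; rewrite Eab !inE eqxx => /(_ isT) /eqP.
exists a; split => //; rewrite /sg au (partner_eq F4 (Htau u) _ ab) //.
by rewrite -Eab.
Qed.

Definition gg (y : H) : H := mate (sg y).
Lemma gg_inj : injective gg.
Proof. move=> y z /(can_inj (@mate_invol F)); exact: sg_inj. Qed.
Lemma g_sg_g y : gg (sg (gg y)) = sg y.
Proof. by rewrite /gg sgK mate_invol. Qed.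
Lemma mate_gg y : mate y = gg (sg y).
Proof. by rewrite /gg sgK. Qed.

Lemma no_sg_iter h k : iter k gg h != sg h.
Proof.
apply/eqP => Ek.
have cl : forall j, (j <= k)%N -> sg (iter j gg h) = iter (k - j) gg h.
  elim=> [|j IH] jk; first by rewrite subn0 Ek.
  apply: gg_inj; rewrite iterS g_sg_g (IH (ltnW jk)).
  have -> : (k - j = (k - j.+1).+1)%N by rewrite subnSK.
  by [].
have := odd_double_half k; set m := k./2; rewrite -addnn.
case: (odd k) => /= kE.
  have jk : (m.+1 <= k)%N by lia.
  have := cl _ jk; have -> : (k - m.+1 = m)%N by lia.
  move=> E; have : mate (iter m.+1 gg h) = iter m.+1 gg h.
    by rewrite mate_gg E.
  by move/eqP; rewrite (negbTE (mate_nofix _)).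
have jk : (m <= k)%N by lia.
have := cl _ jk; have -> : (k - m = m)%N by lia.
move=> E; by move: (sg_neq (iter m gg h)); rewrite E eqxx.
Qed.

Local Notation fc := (fconnect gg).

Lemma fc_sym x y : fc x y = fc y x.
Proof. exact: (fconnect_sym gg_inj). Qed.

Lemma fc_trans x y z : fc x y -> fc y z -> fc x z.
Proof. exact: connect_trans. Qed.

Lemma no_fc_sg y : ~~ fc y (sg y).
Proof.
apply/negP => /iter_findex E; by move: (no_sg_iter y (findex gg y (sg y))); rewrite E eqxx.
Qed.

Lemma fc_sg y z : fc y z -> fc (sg y) (sg z).
Proof.
move=> /iter_findex <-; elim: (findex gg y z) => [|k IH] /=; first exact: connect0.
apply: fc_trans IH _; rewrite fc_sym.
by have := fconnect1 gg (sg (gg (iter k gg y))); rewrite g_sg_g.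
Qed.

Lemma fc_mate y : fc (sg y) (mate y).
Proof. by rewrite mate_gg; apply: fconnect1. Qed.

Lemma fc_adj y z : fc y z -> connect (@adj F) (eps y) (eps z).
Proof.
move=> /iter_findex <-; elim: (findex gg y z) => [|k IH] /=; first exact: connect0.
apply: connect_trans IH _; apply: connect1.
by rewrite /adj; apply/existsP; exists (sg (iter k gg y)); rewrite eps_sg /gg !eqxx.
Qed.

Definition walk_of (h : H) : walk F := [seq (y, sg y) | y <- orbit gg h].

Lemma walk_closed h : closed_walk (walk_of h).
Proof.
apply/and3P; split.
- have : h \in orbit gg h by rewrite -fconnect_orbit connect0.
  by rewrite /walk_of; case: (orbit gg h).
- apply/allP => p /mapP [y _ ->]; by rewrite /single_ok /= eq_sym sg_neq eps_sg eqxx.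
- rewrite /walk_of cycle_map; apply: sub_cycle (cycle_orbit gg_inj h).
  by move=> y z /= /eqP <-.
Qed.

Lemma count1_walk h x : count (fun p => p.1 == x) (walk_of h) = fc h x.
Proof.
rewrite count_map /= -[count _ _]/(count_mem x (orbit gg h)).
by rewrite (count_uniq_mem _ (orbit_uniq gg h)) -fconnect_orbit.
Qed.

Lemma count2_walk h x : count (fun p => p.2 == x) (walk_of h) = fc h (sg x).
Proof.
rewrite count_map /=.
rewrite (eq_count (a2 := pred1 (sg x))); last first.
  move=> y /=; apply/eqP/eqP => [<-|->]; by rewrite sgK.
by rewrite (count_uniq_mem _ (orbit_uniq gg h)) -fconnect_orbit.
Qed.

Lemma count_halfedges (w : walk F) x :
  count_mem x (halfedges w) = (count (fun p => p.1 == x) w + count (fun p => p.2 == x) w)%N.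
Proof.
elim: w => [|p w IH] //=; rewrite /halfedges /= in IH *.
by rewrite IH addnA addnACA addnA.
Qed.

Lemma count_or (w : walk F) x : all (@single_ok F) w ->
  count (fun p : H * H => (p.1 == x) || (p.2 == x)) w =
  (count (fun p => p.1 == x) w + count (fun p => p.2 == x) w)%N.
Proof.
elim: w => [|p w IH] //= /andP [/andP [ne _] aw]; rewrite IH //.
case: (eqVneq p.1 x) => [E|] /=; last by rewrite add0n addnCA.
by rewrite -E eq_sym (negbTE ne) /= add0n addnA.
Qed.

Lemma walk_count h x : (fc h x + fc h (sg x) <= 1)%N.
Proof.
case: (boolP (fc h x)) => hx //=; case: (boolP (fc h (sg x))) => // hs.
by move: (no_fc_sg x); rewrite (fc_trans _ hs) // fc_sym.
Qed.

Lemma walk_circuit h : circuit (walk_of h).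
Proof.
rewrite /circuit walk_closed /=; apply: count_mem_uniq => x.
rewrite count_halfedges count1_walk count2_walk.
have := walk_count h x.
have -> : (x \in halfedges (walk_of h)) = (0 < count_mem x (halfedges (walk_of h)))%N.
  by rewrite -has_pred1 has_count.
rewrite count_halfedges count1_walk count2_walk.
by case: (fc h x); case: (fc h (sg x)).
Qed.

Definition rt (x : H) : H := froot gg x.
Lemma fc_rt x : fc x (rt x). Proof. exact: connect_root. Qed.
Lemma rt_eq x y : (rt x == rt y) = fc x y.
Proof. exact: (root_connect (fconnect_sym gg_inj)). Qed.
Lemma rt_rt x : rt (rt x) = rt x.
Proof. exact: (root_root (fconnect_sym gg_inj)). Qed.

Definition chosen (h : H) : bool :=
  (rt h == h) && (enum_rank h < enum_rank (rt (sg h)))%N.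

Lemma fc_root h x : rt h = h -> fc h x = (rt x == h).
Proof. by move=> E; rewrite -rt_eq E eq_sym. Qed.

Lemma rt_sg_rt x : rt (sg (rt x)) = rt (sg x).
Proof. apply/eqP; rewrite rt_eq; apply: fc_sg; by rewrite fc_sym fc_rt. Qed.

Lemma rt_neq x : rt x != rt (sg x).
Proof. by rewrite rt_eq no_fc_sg. Qed.

Lemma chosen_one x : (chosen (rt x) + chosen (rt (sg x)))%N = 1%N.
Proof.
rewrite /chosen !rt_rt !eqxx /= (rt_sg_rt x) (rt_sg_rt (sg x)) sgK.
have ne := rt_neq x.
have : enum_rank (rt x) != enum_rank (rt (sg x)).
  by apply: contra ne => /eqP /enum_rank_inj ->.
rewrite neq_ltn; case: ltngtP => //=.
Qed.

Definition cps : seq (walk F) := [seq walk_of h | h <- enum H & chosen h].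

Lemma sum_ind (P : pred H) a : (\sum_(h | P h) (h == a) = P a)%N.
Proof.
case: (boolP (P a)) => Pa.
  rewrite (bigD1 a) //= eqxx big1 // => h /andP [_ ha]; by rewrite (negbTE ha).
by rewrite big1 // => h Ph; case: (eqVneq h a) => // E; rewrite -E Ph in Pa.
Qed.

Lemma sum_cps (G : walk F -> nat) :
  (\sum_(w <- cps) G w = \sum_(h | chosen h) G (walk_of h))%N.
Proof. by rewrite big_map big_filter big_enum_cond. Qed.

Lemma cps_partition : circuit_partition cps.
Proof.
split.
  by apply/allP => w /mapP [h _ ->]; exact: walk_circuit.
move=> x; rewrite sum_cps.
under eq_bigr => h hc.
  rewrite count_or; last by case/and3P: (walk_closed h).
  rewrite count1_walk count2_walk.
  have rh : rt h = h by move: hc => /andP [/eqP].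
  rewrite !(fc_root _ rh) eq_sym [rt (sg x) == _]eq_sym.
  over.
by rewrite big_split /= !sum_ind chosen_one.
Qed.

Definition Timg : {set trans F} := [set tau0 u | u : V].

Lemma tau_cps : tau cps = Timg.
Proof.
apply/setP => t; rewrite inE; apply/forallP/imsetP => [Hall|[u _ ->] B].
  have [v tv] := trans_vertex t.
  have : (0 < #|Hv v|)%N by rewrite (card_Hv F4).
  case/card_gt0P => y; rewrite inE => /eqP ey.
  have [z [yz BP]] := partner_ex F4 tv ey.
  move: (Hall [set y; z]); rewrite BP /= => /hasP [w /mapP [h _ ->]] /hasP [p /mapP [y' _ ->]] /= /eqP Ep.
  exists v => //.
  have e' : eps y' = v.
    have := subsetP (block_sub F4 tv BP) y'; rewrite -Ep !inE eqxx => /(_ isT) /eqP //.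
  apply: (trans_eq F4 tv (Htau v) BP); rewrite -Ep -e'; exact: sg_block.
apply/implyP => BP; have [a [au EB]] := block_pair BP.
have := chosen_one a.
case: (boolP (chosen (rt a))) => ca /= E.
  apply/hasP; exists (walk_of (rt a)); first by apply: map_f; rewrite mem_filter ca mem_enum.
  apply/hasP; exists (a, sg a); last by rewrite EB.
  by apply: map_f; rewrite -fconnect_orbit fc_sym fc_rt.
have cb : chosen (rt (sg a)) by case: (chosen (rt (sg a))) E.
apply/hasP; exists (walk_of (rt (sg a))); first by apply: map_f; rewrite mem_filter cb mem_enum.
apply/hasP; exists (sg a, sg (sg a)); last by rewrite sgK EB setUC.
by apply: map_f; rewrite -fconnect_orbit fc_sym fc_rt.
Qed.

Lemma size_cps : size cps = #|[set h | chosen h]|.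
Proof.
rewrite size_map size_filter -sum1_count big_enum_cond -sum1_card.
by apply: eq_bigl => h; rewrite !inE.
Qed.

End Perm.

End P3.
Import P3.

Module P4.
Import GRing.Theory Num.Theory.
Local Open Scope ring_scope.

Section Flows.
Variable F : graph.
Local Notation V := (gV F).
Local Notation H := (gH F).
Hypothesis F4 : four_regular F.
Variable tl : H -> bool.
Hypothesis dir : directed tl.
Variable o : trans F -> {set H}.
Hypothesis Ho : trans_orientation o.
Variable tau0 : V -> trans F.
Hypothesis Htau : forall u, trans_at u (tau0 u).

Local Notation sg := (sg tau0).
Local Notation gg := (gg tau0).
Local Notation fc := (fconnect gg).
Local Notation walk_of := (walk_of tau0).
Local Notation phi := (phi tl o).
Local Notation fl := (fl tl).

Lemma fl_walk h x : fl (sigma tl (walk_of h)) x = (fc h (sg x))%:R - (fc h x)%:R.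
Proof.
by rewrite fl_sigma ?(walk_closed F4 Htau) // count1_walk (count2_walk F4 Htau).
Qed.

Lemma sum_pair (x : edge F -> rat) a : \sum_(h in [set a; sg a]) fl x h = fl x a + fl x (sg a).
Proof.
rewrite big_setU1 /= ?big_set1 // inE eq_sym; exact: sg_neq.
Qed.

Lemma phi_tau u : exists a, eps a = u /\ forall x, phi (tau0 u) x = fl x a + fl x (sg a).
Proof.
have [a [au E]] := block_pair F4 Htau (Ho (tau0 u)).
exists a; split => // x; rewrite phiE //. by rewrite E sum_pair.
Qed.

Lemma phi_walk u h : phi (tau0 u) (sigma tl (walk_of h)) = 0.
Proof.
have [a [_ ->]] := phi_tau u; rewrite !fl_walk (sgK F4 Htau).
by rewrite addrC subrKA subrr.
Qed.

Section Zflow.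
Variable E : {set edge F}.
Variable x : edge F -> rat.
Hypothesis cx : cycvec tl E x.
Hypothesis px : forall u, phi (tau0 u) x = 0.

Lemma fl_sg y : fl x (sg y) = - fl x y.
Proof.
set u := eps y; set B := [set y; sg y].
have BP : B \in val (tau0 u) := sg_block F4 Htau y.
have bal0 := cycvec_bal u cx.
have BH : B \subset Hv u by apply: (block_sub F4 (Htau u)).
suff S : fl x y + fl x (sg y) = 0 by apply/eqP; rewrite -addr_eq0 addrC S.
have := px u; rewrite phiE //.
case: (block_other F4 (Htau u) BP (Ho (tau0 u))) => -> ; first by rewrite sum_pair.
move=> S2; rewrite -sum_pair -/B.
move: bal0; rewrite /bal (eq_bigl (fun h => h \in Hv u)); last by move=> h; rewrite inE.
rewrite (big_setID B) /= S2 addr0.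
by move/setIidPr: BH => ->.
Qed.

Lemma fl_gg y : fl x (gg y) = fl x y.
Proof. by rewrite /P3.gg fl_mate // fl_sg opprK. Qed.

Lemma fl_fc y z : fc y z -> fl x z = fl x y.
Proof.
move=> /iter_findex <-; elim: (findex gg y z) => [|k IH] //=.
by rewrite fl_gg.
Qed.

End Zflow.

End Flows.

End P4.
Import P4.

Module P5.
Import GRing.Theory Num.Theory.
Local Open Scope ring_scope.

Section Mx.
Variable F : graph.
Local Notation V := (gV F).
Local Notation H := (gH F).
Variable tl : H -> bool.
Hypothesis dir : directed tl.
Variable o : trans F -> {set H}.
Variable E : {set edge F}.
Variable I : finType.
Variable w : I -> walk F.
Hypothesis Hw : cycle_spanning_set tl E w.

Local Notation n := #|{: edge F}|.
Local Notation phi := (phi tl o).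

Definition unrow (u : 'rV[rat]_n) : edge F -> rat := fun e => u 0 (enum_rank e).
Lemma rowvK x : unrow (rowv x) =1 x.
Proof. by move=> e; rewrite /unrow mxE enum_rankK. Qed.
Lemma unrowK u : rowv (unrow u) = u.
Proof. by apply/rowP => k; rewrite mxE /unrow enum_valK. Qed.

Lemma cycvec_ext x y : x =1 y -> cycvec tl E x -> cycvec tl E y.
Proof.
move=> xy [xE xv]; split; first by move=> e eE; rewrite -xy xE.
move=> v; transitivity (\sum_(e in [set e | e \notin E]) inc tl v e * x e); last exact: xv.
by apply: eq_bigr => e _; rewrite xy.
Qed.

Lemma phi_ext t x y : x =1 y -> phi t x = phi t y.
Proof. by move=> xy; apply: eq_bigr => e _; rewrite xy. Qed.

Lemma cycvec_sum (J : finType) (c : J -> rat) (xs : J -> edge F -> rat) :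
  (forall j, cycvec tl E (xs j)) -> cycvec tl E (fun e => \sum_j c j * xs j e).
Proof.
move=> cj; have xE : forall e, e \in E -> \sum_j c j * xs j e = 0.
  by move=> e eE; apply: big1 => j _; have [-> //] := cj j; rewrite mulr0.
split => // v; rewrite cyc_full // /bal /fl.
under eq_bigr do rewrite mulr_sumr.
rewrite exchange_big /= big1 // => j _.
transitivity (c j * bal tl v (xs j)); last by rewrite (cycvec_bal v (cj j)) mulr0.
rewrite /bal /fl mulr_sumr; apply: eq_bigr => h _; by rewrite mulrCA.
Qed.

Definition CMmx : 'M[rat]_(#|{: I}|, n) := \matrix_(i < #|{: I}|) rowv (sigma tl (w (enum_val i))).

Lemma CMmxE i j : CMmx i j = sigma tl (w (enum_val i)) (enum_val j).
Proof. by rewrite /CMmx mxE mxE. Qed.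

Lemma Z_sub u : (u <= CMmx)%MS -> cycvec tl E (unrow u).
Proof.
case/submxP => D ->.
have [Hcl _] := Hw.
apply: (@cycvec_ext (fun e => \sum_i D 0 i * sigma tl (w (enum_val i)) e)).
  by move=> e; rewrite /unrow mxE; apply: eq_bigr => i _; rewrite CMmxE enum_rankK.
apply: cycvec_sum => i; have /andP [c a] := Hcl (enum_val i).
exact: cycvec_walk.
Qed.

Lemma sub_Z x : cycvec tl E x -> (rowv x <= CMmx)%MS.
Proof.
move=> cx; have [_ [_ [B [_ [_ [_ [_ span]]]]]]] := Hw.
apply: submx_trans (span x cx) _.
apply/row_subP => k; rewrite rowK.
have -> : rowv (sigma tl (w (enum_val k))) = row (enum_rank (enum_val k)) CMmx.
  by rewrite rowK enum_rankK.
exact: row_sub.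
Qed.

Definition DS (S : {set trans F}) : 'M[rat]_(n, #|S|) :=
  \matrix_(j < n, k < #|S|) Delta tl o (enum_val j) (enum_val k).

Lemma phi_enum t x : phi t x = \sum_(j < n) x (enum_val j) * Delta tl o (enum_val j) t.
Proof.
rewrite /P1.phi; transitivity (\sum_(e in {: edge F}) x e * Delta tl o e t).
  by apply: eq_bigl => e; rewrite inE.
by rewrite big_enum_val.
Qed.

Lemma mulDS u S k : (u *m DS S) 0 k = phi (enum_val k) (unrow u).
Proof.
rewrite mxE phi_enum; apply: eq_bigr => j _; by rewrite mxE /unrow enum_valK.
Qed.

Lemma memK u S : (u <= kermx (DS S))%MS <-> forall t, t \in S -> phi t (unrow u) = 0.
Proof.
rewrite sub_kermx; split.
  move=> /eqP Z t tS; have := mulDS u (enum_rank_in tS t).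
  by rewrite Z mxE enum_rankK_in // => <-.
move=> Ht; apply/eqP/rowP => k; rewrite mulDS mxE Ht //; exact: enum_valP.
Qed.

Definition Us S := (CMmx :&: kermx (DS S))%MS.

Lemma memU u S : (u <= Us S)%MS <-> cycvec tl E (unrow u) /\ forall t, t \in S -> phi t (unrow u) = 0.
Proof.
rewrite /Us sub_capmx; split.
  by move=> /andP [z k]; split; [exact: Z_sub | exact/memK].
move=> [c k]; apply/andP; split; last exact/memK.
by rewrite -(unrowK u); apply: sub_Z.
Qed.

Lemma memUx x S : (rowv x <= Us S)%MS <-> cycvec tl E x /\ forall t, t \in S -> phi t x = 0.
Proof.
rewrite memU; split => [[c k]|[c k]]; split.
- by apply: cycvec_ext c; exact: rowvK.
- by move=> t tS; rewrite -(k t tS); apply: phi_ext => e; rewrite rowvK.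
- by apply: cycvec_ext c => e; rewrite rowvK.
- by move=> t tS; rewrite -(k t tS); apply: phi_ext => e; rewrite rowvK.
Qed.

Definition ck S := \rank (CMmx *m DS S).

Lemma ck_dim S : (ck S + \rank (Us S))%N = \rank CMmx.
Proof. exact: mxrank_mul_ker. Qed.

Lemma crank_ck S : crank (CMDelta tl o w) S = ck S.
Proof.
rewrite /crank /ck -mxrank_tr; congr (\rank _); apply/matrixP => i k.
rewrite !mxE /CMDelta.
transitivity (phi (enum_val k) (sigma tl (w (enum_val i)))); first by [].
rewrite phi_enum; apply: eq_bigr => j _; by rewrite CMmxE !mxE.
Qed.

Lemma Us_mono (S S' : {set trans F}) : S \subset S' -> (Us S' <= Us S)%MS.
Proof.
move=> sub; apply/row_subP => k; have := row_sub k (Us S'); rewrite !memU => [[c h]].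
by split => // t tS; apply: h; apply: (subsetP sub).
Qed.

Lemma ck_mono (S S' : {set trans F}) : S \subset S' -> (ck S <= ck S')%N.
Proof.
move=> sub; have := ck_dim S; have := ck_dim S'; have := mxrankS (Us_mono sub).
lia.
Qed.

Lemma ck_le S : (ck S <= \rank CMmx)%N.
Proof. have := ck_dim S; lia. Qed.

Definition Dcol t : 'cV[rat]_n := \col_(j < n) Delta tl o (enum_val j) t.

Lemma mulDcol u t : (u *m Dcol t) 0 0 = phi t (unrow u).
Proof.
rewrite mxE phi_enum; apply: eq_bigr => j _; by rewrite mxE /unrow enum_valK.
Qed.

Lemma Us_add1 (S : {set trans F}) t : (\rank (Us S) <= (\rank (Us (t |: S))).+1)%N.
Proof.
have := mxrank_mul_ker (Us S) (Dcol t).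
have r1 : (\rank (Us S *m Dcol t) <= 1)%N by apply: rank_leq_col.
have sub : ((Us S :&: kermx (Dcol t)) <= Us (t |: S))%MS.
  apply/row_subP => k; have := row_sub k (Us S :&: kermx (Dcol t))%MS.
  rewrite sub_capmx => /andP [/memU [c h] /sub_kermxP Z]; apply/memU; split => // s.
  rewrite !inE => /orP [/eqP ->|]; last exact: h.
  by rewrite -mulDcol Z mxE.
have := mxrankS sub; lia.
Qed.

Lemma ck_add1 (S : {set trans F}) t : (ck (t |: S) <= (ck S).+1)%N.
Proof. have := ck_dim S; have := ck_dim (t |: S); have := Us_add1 S t; lia. Qed.

Lemma ck_strict (S : {set trans F}) t x : cycvec tl E x -> (forall s, s \in S -> phi s x = 0) -> phi t x != 0 ->
  ck (t |: S) = (ck S).+1.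
Proof.
move=> cx px nz.
have sub : (Us (t |: S) <= Us S)%MS by apply: Us_mono; apply: subsetUr.
have xin : (rowv x <= Us S)%MS by apply/memUx.
have xout : ~~ (rowv x <= Us (t |: S))%MS.
  apply/negP => /memUx [_ h]; by move: nz; rewrite h ?setU11.
have lt : (Us (t |: S) < Us S)%MS.
  rewrite ltmxE sub /=; apply: contra xout => sub'; exact: submx_trans xin sub'.
move: lt; rewrite ltmxErank => /andP [_ lt].
have := ck_dim S; have := ck_dim (t |: S); have := ck_add1 S t. move: lt.
move: (\rank (Us (t |: S))) (\rank (Us S)) (ck (t |: S)) (ck S) (\rank CMmx) => a b c d r. lia.
Qed.

End Mx.

End P5.
Import P5.

Module P6.
Import GRing.Theory Num.Theory.
Local Open Scope ring_scope.

Lemma adj_sym (F : graph) : connect_sym (@adj F).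
Proof.
apply: sym_connect_sym => u v; apply/existsP/existsP => [[h /andP [/eqP hu /eqP hv]]|[h /andP [/eqP hu /eqP hv]]];
  exists (mate h); by rewrite mate_invol hu hv !eqxx.
Qed.

Section Circ.
Variable F : graph.
Local Notation V := (gV F).
Local Notation H := (gH F).
Hypothesis F4 : four_regular F.
Variable tl : H -> bool.
Hypothesis dir : directed tl.
Variable o : trans F -> {set H}.
Hypothesis Ho : trans_orientation o.
Variable E : {set edge F}.
Hypothesis HE : forall e1 e2 : edge F, e1 \in E -> e2 \in E ->
  forall h1 h2 : H, h1 \in val e1 -> h2 \in val e2 ->
  connect (@adj F) (eps h1) (eps h2) -> e1 = e2.
Variable I : finType.
Variable w : I -> walk F.
Hypothesis Hw : cycle_spanning_set tl E w.
Variable tau0 : V -> trans F.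
Hypothesis Htau : forall u, trans_at u (tau0 u).

Local Notation sg := (sg tau0).
Local Notation gg := (gg tau0).
Local Notation fc := (fconnect gg).
Local Notation walk_of := (walk_of tau0).
Local Notation rt := (rt tau0).
Local Notation chosen := (chosen tau0).
Local Notation phi := (phi tl o).
Local Notation fl := (fl tl).
Local Notation Us := (Us tl o w).
Local Notation CMmx := (CMmx tl w).
Local Notation sgK := (sgK F4 Htau).

Definition Aset : {set H} := [set h | chosen h && avoids E (walk_of h)].
Definition Cmx : 'M[rat]_(#|Aset|, #|{: edge F}|) :=
  \matrix_(k < #|Aset|) rowv (sigma tl (walk_of (enum_val k))).

Lemma chosen_root h : chosen h -> rt h = h.
Proof. by move=> /andP [/eqP]. Qed.

Lemma fc_chosen h y : chosen h -> fc h y = (rt y == h).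
Proof. by move=> /chosen_root; apply: fc_root. Qed.

Lemma not_chosen_sg h : chosen h -> ~~ chosen (rt (sg h)).
Proof.
move=> ch; have := chosen_one F4 Htau h; rewrite (chosen_root ch) ch.
by case: (chosen _).
Qed.

Lemma Cmx_sub : (Cmx <= Us (Timg tau0))%MS.
Proof.
apply/row_subP => k; rewrite rowK; apply/(memUx dir o Hw); split.
  have := enum_valP k; rewrite inE => /andP [_ av].
  by apply: (cycvec_walk dir) => //; apply: (walk_closed F4 Htau).
move=> t /imsetP [u _ ->]; exact: (phi_walk F4 dir Ho Htau).
Qed.

Section Decomp.
Variable x : edge F -> rat.
Hypothesis cx : cycvec tl E x.
Hypothesis px : forall u, phi (tau0 u) x = 0.

Lemma fl_class c y z : (fc c z || fc c (sg z)) -> (c = rt y \/ c = rt (sg y)) ->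
  fl x z = fl x y \/ fl x z = - fl x y.
Proof.
have flc : forall c', c' = rt y \/ c' = rt (sg y) -> fl x c' = fl x y \/ fl x c' = - fl x y.
  move=> c' [->|->].
    by left; apply: (fl_fc F4 dir Ho Htau cx px); apply: fc_rt.
  right; rewrite -(fl_sg F4 dir Ho Htau cx px).
  by apply: (fl_fc F4 dir Ho Htau cx px); apply: fc_rt.
move=> /orP [fz|fz] cc.
  rewrite (fl_fc F4 dir Ho Htau cx px (y := c)) //; exact: flc.
have := fl_fc F4 dir Ho Htau cx px fz; rewrite (fl_sg F4 dir Ho Htau cx px) => /eqP.
rewrite eqr_oppLR => /eqP ->.
by case: (flc c cc) => ->; [right|left; rewrite opprK].
Qed.

Lemma zero_class c y : chosen c -> (c = rt y \/ c = rt (sg y)) -> ~~ avoids E (walk_of c) ->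
  fl x y = 0.
Proof.
move=> ch cc /allPn [p /mapP [z zo ->]] /forallPn [e /=].
rewrite negb_imply negb_and !negbK => /andP [eE zin].
have [xE _] := cx.
have zf : fc c z by rewrite fconnect_orbit.
have [z' [z'e incl]] : exists z', z' \in val e /\ (fc c z' || fc c (sg z')).
  case/orP: zin => zin; [exists z | exists (sg z)]; split => //; first by rewrite zf.
  by rewrite sgK zf orbT.
have : fl x z' = 0.
  move: z'e; rewrite mem_edge => /eqP Ee; by rewrite /P1.fl -Ee xE // mulr0.
case: (fl_class incl cc) => -> //; by move/eqP; rewrite oppr_eq0 => /eqP.
Qed.

Lemma decomp : rowv x = (\row_k (- fl x (enum_val k))) *m Cmx.
Proof.
apply/rowP => j; rewrite !mxE.
have [y ey] := edge_exists (enum_val j).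
rewrite ey (fl_inv tl x y).
transitivity (sgn tl y * \sum_(k < #|Aset|) (- fl x (enum_val k)) * fl (sigma tl (walk_of (enum_val k))) y).
  congr (_ * _).
  rewrite -(big_enum_val (fun h => - fl x h * fl (sigma tl (walk_of h)) y)).
  have eqt : forall h, h \in Aset -> - fl x h * fl (sigma tl (walk_of h)) y =
      (h == rt y)%:R * fl x h - (h == rt (sg y))%:R * fl x h.
    move=> h; rewrite inE => /andP [ch _].
    rewrite (fl_walk F4 dir Htau) !(fc_chosen _ ch) ![_ == h]eq_sym.
    by ring.
  rewrite (eq_bigr _ eqt) sumrB.
  have si : forall a, \sum_(h in Aset) (h == a)%:R * fl x h = (a \in Aset)%:R * fl x a.
    move=> a; case: (boolP (a \in Aset)) => aA.
      rewrite (bigD1 a) //= eqxx mul1r big1 ?addr0 ?mul1r // => h /andP [_ /negbTE ->].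
      by rewrite mul0r.
    rewrite big1 ?mul0r // => h hA; case: (eqVneq h a) => [E0|]; last by rewrite mul0r.
    by move: hA; rewrite E0 (negbTE aA).
  rewrite !si (fl_fc F4 dir Ho Htau cx px (fc_rt _ y)).
  rewrite (fl_fc F4 dir Ho Htau cx px (fc_rt _ (sg y))) (fl_sg F4 dir Ho Htau cx px).
  have := chosen_one F4 Htau y.
  case ca : (chosen (rt y)); case cb : (chosen (rt (sg y))) => //= _.
    have bA : (rt (sg y) \in Aset) = false by rewrite inE cb.
    rewrite bA mul0r subr0; case: (boolP (rt y \in Aset)) => aA; first by rewrite mul1r.
    rewrite mul0r (zero_class ca (or_introl erefl)) //.
    by move: aA; rewrite inE ca.
  have aA : (rt y \in Aset) = false by rewrite inE ca.
  rewrite aA mul0r sub0r mulrN opprK; case: (boolP (rt (sg y) \in Aset)) => bA; first by rewrite mul1r.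
  rewrite mul0r (zero_class cb (or_intror erefl)) //.
  by move: bA; rewrite inE cb.
rewrite mulr_sumr; apply: eq_bigr => k _.
rewrite !mxE ey (fl_inv tl (sigma tl _) y).
by rewrite mulrCA.
Qed.

End Decomp.

Lemma Us_sub : (Us (Timg tau0) <= Cmx)%MS.
Proof.
apply/row_subP => k; have := row_sub k (Us (Timg tau0)); rewrite (memU dir o Hw) => [[c h]].
rewrite -(unrowK (row k _)) (decomp c); first by apply: submxMl.
move=> u; apply: h; exact: imset_f.
Qed.

Lemma Cmx_free : row_free Cmx.
Proof.
have key : forall v : 'rV[rat]_#|Aset|, v *m Cmx = 0 -> v = 0.
  move=> v vz; apply/rowP => k; rewrite mxE.
  set h := enum_val k.
  have hA : h \in Aset by apply: enum_valP.
  have ch : chosen h by move: hA; rewrite inE => /andP [].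
  have := congr1 (fun M : 'M[rat]_(1, #|{: edge F}|) => sgn tl h * M 0 (enum_rank (edge_of h))) vz.
  rewrite !mxE mulr0 mulr_sumr.
  under eq_bigr => l _.
    rewrite !mxE enum_rankK mulrCA -/(P1.fl tl _ h) (fl_walk F4 dir Htau).
    have cl : chosen (enum_val l) by have := enum_valP l; rewrite inE => /andP [].
    rewrite !(fc_chosen _ cl) (chosen_root ch).
    have -> : (rt (sg h) == enum_val l) = false.
      apply/negbTE; apply: contra (not_chosen_sg ch) => /eqP ->; exact: cl.
    over.
  rewrite /= (bigD1 k) //= eqxx big1 ?addr0.
    by move/eqP; rewrite sub0r mulrN1 oppr_eq0 => /eqP.
  move=> l lk; rewrite (_ : (h == enum_val l) = false) ?subrr ?mulr0 //.
  apply/negbTE; apply: contra lk => /eqP /enum_val_inj ->; by [].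
rewrite -kermx_eq0; apply/eqP/row_matrixP => k; rewrite row0; apply: key.
by apply/sub_kermxP; apply: row_sub.
Qed.

Lemma rank_Us_T : \rank (Us (Timg tau0)) = #|Aset|.
Proof.
have := Cmx_free; rewrite /row_free => /eqP <-.
apply/eqP; rewrite eqn_leq; apply/andP; split; apply: mxrankS.
  exact: Us_sub.
exact: Cmx_sub.
Qed.

End Circ.

End P6.
Import P6.

Module P7.

Section Count.
Variable F : graph.
Local Notation V := (gV F).
Local Notation H := (gH F).
Hypothesis F4 : four_regular F.
Variable E : {set edge F}.
Hypothesis HE : forall e1 e2 : edge F, e1 \in E -> e2 \in E ->
  forall h1 h2 : H, h1 \in val e1 -> h2 \in val e2 ->
  connect (@adj F) (eps h1) (eps h2) -> e1 = e2.
Variable tau0 : V -> trans F.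
Hypothesis Htau : forall u, trans_at u (tau0 u).

Local Notation sg := (sg tau0).
Local Notation gg := (gg tau0).
Local Notation fc := (fconnect gg).
Local Notation walk_of := (walk_of tau0).
Local Notation rt := (rt tau0).
Local Notation chosen := (chosen tau0).
Local Notation sgK := (sgK F4 Htau).

Definition incl h z := fc h z || fc h (sg z).

Lemma incl_mate h z : incl h z -> incl h (mate z).
Proof.
rewrite /incl => /orP [f|f].
  apply/orP; right; apply: (fc_trans f); rewrite (fc_sym F4 Htau).
  have := fconnect1 gg (sg (mate z)); by rewrite (mate_gg F4 Htau) (g_sg_g F4 Htau) sgK.
apply/orP; left; apply: (fc_trans f); exact: (fc_mate F4 Htau).
Qed.

Lemma incl_edge h (e : edge F) y z : y \in val e -> z \in val e -> incl h z -> incl h y.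
Proof.
rewrite !mem_edge => /eqP -> /eqP E1 iz.
have : y \in val (edge_of z) by rewrite -E1 /= !inE eqxx.
rewrite /= !inE => /orP [/eqP ->|/eqP ->] //; exact: incl_mate.
Qed.

Lemma incl_connect h y : incl h y -> connect (@adj F) (eps h) (eps y).
Proof.
rewrite /incl => /orP [f|f]; first exact: (fc_adj F4 Htau f).
by have := fc_adj F4 Htau f; rewrite (eps_sg F4 Htau).
Qed.

Definition cr y := if chosen (rt y) then rt y else rt (sg y).

Lemma cr_chosen y : chosen (cr y).
Proof.
rewrite /cr; have := chosen_one F4 Htau y; case E1 : (chosen (rt y)) => //=.
by case: (chosen (rt (sg y))).
Qed.

Lemma cr_incl y : incl (cr y) y.
Proof.
rewrite /cr /incl; case: ifP => _.
  by rewrite (fc_sym F4 Htau) (fc_rt tau0 y).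
by rewrite (fc_sym F4 Htau (rt (sg y)) (sg y)) (fc_rt tau0 (sg y)) orbT.
Qed.

Lemma cr_uniq h y : chosen h -> incl h y -> cr y = h.
Proof.
move=> ch; rewrite /incl !(fc_chosen F4 Htau _ ch) /cr => /orP [/eqP E1|/eqP E1].
  by rewrite E1 ch.
have := chosen_one F4 Htau y; rewrite E1 ch.
by case: (chosen (rt y)).
Qed.

Definition Mset : {set H} := [set h | chosen h && ~~ avoids E (walk_of h)].

Lemma card_M : #|Mset| = #|E|.
Proof.
case: (pickP (fun _ : H => true)) => [h0 _|none]; last first.
  have E0 : E = set0.
    apply/setP => e; rewrite inE; have [y _] := edge_exists e; by have := none y.
  have M0 : Mset = set0 by apply/setP => h; have := none h.
  by rewrite E0 M0 !cards0.
pose py (e : edge F) := odflt h0 [pick y in val e].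
have pyP : forall e, py e \in val e.
  move=> e; rewrite /py; case: pickP => [y yi|none'] //=.
  have [y ey] := edge_exists e; have := none' y; by rewrite ey /= !inE eqxx.
pose f (e : edge F) := cr (py e).
have -> : Mset = [set f e | e in E].
  apply/setP => h; rewrite inE; apply/andP/imsetP.
    move=> [ch /allPn [p /mapP [z zo ->]] /forallPn [e /=]].
    rewrite negb_imply negb_and !negbK => /andP [eE zin].
    have zf : fc h z by rewrite fconnect_orbit.
    have iz' : exists z', z' \in val e /\ incl h z'.
      case/orP: zin => zin; [exists z | exists (sg z)]; split => //; rewrite /incl ?zf //.
      by rewrite sgK zf orbT.
    have [z' [z'e iz]] := iz'.
    exists e => //; rewrite /f; apply/esym/cr_uniq => //.
    exact: (incl_edge (pyP e) z'e iz).
  move=> [e eE ->]; split; first exact: cr_chosen.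
  have := cr_incl (py e); rewrite /incl; set c := cr (py e) => ic.
  apply/allPn; case/orP: ic => ic.
    exists (py e, sg (py e)); first by apply: map_f; rewrite -fconnect_orbit.
    apply/forallPn; exists e; by rewrite /= eE pyP.
  exists (sg (py e), sg (sg (py e))); first by apply: map_f; rewrite -fconnect_orbit.
  apply/forallPn; exists e; by rewrite /= eE sgK pyP andbF.
apply: card_in_imset => e1 e2 e1E e2E fe.
have i1 := cr_incl (py e1); have i2 := cr_incl (py e2).
rewrite -/(f e1) fe in i1.
apply: (HE e1E e2E (pyP e1) (pyP e2)).
apply: (@connect_trans _ _ (eps (f e2))).
  by rewrite adj_sym; apply: incl_connect.
exact: incl_connect.
Qed.

Lemma card_chosen : #|[set h | chosen h]| = (#|Aset E tau0| + #|E|)%N.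
Proof.
rewrite -card_M -(cardsID (Aset E tau0) [set h | chosen h]).
have -> : [set h | chosen h] :&: Aset E tau0 = Aset E tau0.
  by apply/setP => h; rewrite !inE; case: (chosen h).
have -> : [set h | chosen h] :\: Aset E tau0 = Mset.
  by apply/setP => h; rewrite !inE; case: (chosen h); rewrite /= ?andbF ?andbT.
by [].
Qed.

End Count.

End P7.
Import P7.

Module P8.
Import GRing.Theory Num.Theory.
Local Open Scope ring_scope.

Section Sub.
Variable F : graph.
Local Notation V := (gV F).
Local Notation H := (gH F).
Hypothesis F4 : four_regular F.

Lemma subt_uniq (S : {set trans F}) u s1 s2 : subtransversal S -> s1 \in S -> s2 \in S ->
  trans_at u s1 -> trans_at u s2 -> s1 = s2.
Proof.
move=> /forallP /(_ u) /card_le1_eqP eq1 s1S s2S a1 a2.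
by apply: eq1; rewrite inE ?s1S ?s2S.
Qed.

Definition tauS (S : {set trans F}) (u : V) : trans F :=
  if [pick t in S | trans_at u t] is Some t then t else xchoose (trans_exists F4 u).

Lemma tauS_at S u : trans_at u (tauS S u).
Proof.
rewrite /tauS; case: pickP => [t /andP [_ //]|_].
exact: (xchooseP (trans_exists F4 u)).
Qed.

Lemma tauS_in S u s : subtransversal S -> s \in S -> trans_at u s -> tauS S u = s.
Proof.
move=> sub sS su; rewrite /tauS; case: pickP => [t /andP [tS tu]|none].
  exact: (subt_uniq sub tS sS tu su).
by move: (none s); rewrite sS su.
Qed.

Definition covered (S : {set trans F}) u := [exists t in S, trans_at u t].
Definition unc (S : {set trans F}) := #|[set u | ~~ covered S u]|.

Lemma sub_add (S : {set trans F}) v t : subtransversal S -> ~~ covered S v -> trans_at v t ->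
  subtransversal (t |: S).
Proof.
move=> sub nc tv; apply/forallP => u.
case: (eqVneq u v) => [->|uv].
  apply/card_le1_eqP => a b; rewrite !inE => /andP [/orP [/eqP ->|aS] av] /andP [/orP [/eqP ->|bS] bv] //.
  - by move: nc; rewrite /covered; apply: contraNeq => _; apply/existsP; exists b; rewrite bS bv.
  - by move: nc; rewrite /covered; apply: contraNeq => _; apply/existsP; exists a; rewrite aS av.
  - by move: nc; rewrite /covered; apply: contraNeq => _; apply/existsP; exists a; rewrite aS av.
apply/card_le1_eqP => a b; rewrite !inE => /andP [/orP [/eqP ->|aS] au] /andP [/orP [/eqP ->|bS] bu].
- by [].
- by move: uv; rewrite (trans_at_uniq F4 au tv) eqxx.
- by move: uv; rewrite (trans_at_uniq F4 bu tv) eqxx.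
- first [exact: (subt_uniq sub aS bS au bu) | exact: (subt_uniq sub bS aS bu au)].
Qed.

Lemma unc_add (S : {set trans F}) v t : ~~ covered S v -> trans_at v t ->
  unc (t |: S) = (unc S).-1.
Proof.
move=> nc tv; rewrite /unc (cardsD1 v [set u | ~~ covered S u]) inE nc /=.
suff -> : [set u | ~~ covered (t |: S) u] = [set u | ~~ covered S u] :\ v by [].
apply/setP => u; rewrite !inE /covered.
case: (eqVneq u v) => [->|uv] /=.
  by apply/negbTE; rewrite negbK; apply/existsP; exists t; rewrite setU11 tv.
congr (~~ _); apply/existsP/existsP => [[s /andP [sS su]]|[s /andP [sS su]]].
  move: sS; rewrite !inE => /orP [/eqP E|sS]; last by exists s; rewrite sS su.
  move: su; rewrite E => su'; by move: uv; rewrite -(trans_at_uniq F4 tv su') eqxx.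
by exists s; rewrite inE sS orbT su.
Qed.

Lemma unc0_Timg (S : {set trans F}) : subtransversal S -> unc S = 0%N -> S = Timg (tauS S).
Proof.
move=> sub /eqP; rewrite cards_eq0 => /eqP U0.
apply/setP => s; apply/idP/imsetP => [sS|[u _ ->]].
  have [u su] := trans_vertex s; exists u => //; by rewrite (tauS_in sub sS su).
have : u \notin [set u | ~~ covered S u] by rewrite U0 inE.
rewrite inE negbK => /existsP [t /andP [tS tu]]; by rewrite (tauS_in sub tS tu).
Qed.

Lemma subt_card (S : {set trans F}) : subtransversal S -> (#|S| <= #|V|)%N.
Proof.
move=> sub; pose vt (t : trans F) := xchoose (trans_vertex t).
have vtP : forall t, trans_at (vt t) t by move=> t; exact: (xchooseP (trans_vertex t)).
rewrite -(card_in_imset (f := vt)); first exact: max_card.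
move=> a b aS bS eab; apply: (subt_uniq sub aS bS (vtP a)); rewrite eab; exact: vtP.
Qed.

End Sub.

End P8.
Import P8.

Module P9.
Import GRing.Theory Num.Theory.
Local Open Scope ring_scope.

Section L1.
Variable F : graph.
Local Notation V := (gV F).
Local Notation H := (gH F).
Hypothesis F4 : four_regular F.
Variable tl : H -> bool.
Hypothesis dir : directed tl.
Variable o : trans F -> {set H}.
Hypothesis Ho : trans_orientation o.
Variable E : {set edge F}.
Hypothesis HE : forall e1 e2 : edge F, e1 \in E -> e2 \in E ->
  forall h1 h2 : H, h1 \in val e1 -> h2 \in val e2 ->
  connect (@adj F) (eps h1) (eps h2) -> e1 = e2.
Variable I : finType.
Variable w : I -> walk F.
Hypothesis Hw : cycle_spanning_set tl E w.

Local Notation ck := (ck tl o w).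
Local Notation phi := (phi tl o).
Local Notation fl := (fl tl).

Lemma pair_sum x a b : a != b -> \sum_(h in [set a; b]) fl x h = fl x a + fl x b.
Proof. by move=> ab; rewrite big_setU1 /= ?big_set1 // inE. Qed.

Lemma SP x v h0 : eps h0 = v -> bal tl v x = 0 -> (forall t, trans_at v t -> phi t x = 0) ->
  fl x h0 = 0.
Proof.
move=> e0 b0 pt.
have pairs : forall a b, eps a = v -> eps b = v -> a != b -> fl x a + fl x b = 0.
  move=> a b ea eb ab; have [t [tv BP]] := mk_trans F4 ea eb ab.
  have := pt t tv; rewrite phiE //.
  case: (block_other F4 tv BP (Ho t)) => ->; first by rewrite pair_sum.
  move=> S2; rewrite -pair_sum //.
  move: b0; rewrite /bal (eq_bigl (fun h => h \in Hv v)); last by move=> h; rewrite inE.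
  rewrite (big_setID [set a; b]) /= S2 addr0.
  by move/setIidPr: (block_sub F4 tv BP) => ->.
have c3 := cardsD1 h0 (Hv v); rewrite (card_Hv F4) inE e0 eqxx /= in c3.
have : (1 < #|Hv v :\ h0|)%N by lia.
case/card_gt1P => a [b [aH bH ab]]; move: aH bH; rewrite !inE => /andP [a0 /eqP av] /andP [b0' /eqP bv].
have p1 := pairs _ _ e0 av (ltac:(by rewrite eq_sym)).
have p2 := pairs _ _ e0 bv (ltac:(by rewrite eq_sym)).
have p3 := pairs _ _ av bv ab.
lra.
Qed.


Lemma L1 (S : {set trans F}) v : subtransversal S -> ~~ covered S v ->
  exists t, trans_at v t /\ ck (t |: S) = (ck S).+1.
Proof.
move=> sub nc.
case: (boolP [exists t, trans_at v t && (ck (t |: S) == (ck S).+1)]) => [/existsP [t /andP [tv /eqP e]]|nex].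
  by exists t.
exfalso.
have Hphi : forall t x, trans_at v t -> cycvec tl E x -> (forall s, s \in S -> phi s x = 0) -> phi t x = 0.
  move=> t x tv cx px; apply/eqP; apply: contraNT nex => nz; apply/existsP; exists t.
  by rewrite tv (ck_strict dir Hw cx px nz) eqxx.
have K : forall x, cycvec tl E x -> (forall s, s \in S -> phi s x = 0) -> forall h, eps h = v -> fl x h = 0.
  move=> x cx px h eh; apply: (SP eh (cycvec_bal v cx)) => t tv; exact: Hphi.
have : (0 < #|Hv v|)%N by rewrite (card_Hv F4).
case/card_gt0P => h0; rewrite inE => /eqP e0.
pose tt t u := if u == v then t else tauS F4 S u.
have Htt : forall t, trans_at v t -> forall u, trans_at u (tt t u).
  move=> t tv u; rewrite /tt; case: (eqVneq u v) => [->|_] //; exact: tauS_at.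
have STt : forall t, trans_at v t -> forall s, s \in S -> s \in Timg (tt t).
  move=> t tv s sS; have [u su] := trans_vertex s.
  apply/imsetP; exists u => //; rewrite /tt.
  case: (eqVneq u v) => [E1|_]; last by rewrite (tauS_in F4 sub sS su).
  exfalso; move/negP: nc; apply; apply/existsP; exists s; by rewrite sS -E1 su.
pose y t := sigma tl (walk_of (tt t) h0).
have ybal : forall t, trans_at v t -> forall u, bal tl u (y t) = 0.
  move=> t tv u; apply: (bal_closed dir); exact: (walk_closed F4 (Htt t tv)).
have yphiS : forall t, trans_at v t -> forall s, s \in S -> phi s (y t) = 0.
  move=> t tv s /(STt t tv) /imsetP [u _ ->]; exact: (phi_walk F4 dir Ho (Htt t tv)).
have yphit : forall t, trans_at v t -> phi t (y t) = 0.
  move=> t tv; have -> : t = tt t v by rewrite /tt eqxx.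
  rewrite {2}/tt eqxx; exact: (phi_walk F4 dir Ho (Htt t tv)).
have yfl : forall t, trans_at v t -> fl (y t) h0 = -1.
  move=> t tv; rewrite (fl_walk F4 dir (Htt t tv)) (negbTE (no_fc_sg F4 (Htt t tv) h0)).
  by rewrite connect0 sub0r.
have yE : forall t, trans_at v t -> forall e, y t e != 0 ->
    exists z, z \in val e /\ connect (@adj F) v (eps z).
  move=> t tv e; have [z ez] := edge_exists e; rewrite ez (fl_inv tl (y t) z).
  rewrite (fl_walk F4 dir (Htt t tv)) => nz; exists z; split; first by rewrite /= !inE eqxx.
  move: nz; rewrite -e0.
  case: (boolP (fconnect (gg (tt t)) h0 z)) => f1; first by move=> _; exact: (fc_adj F4 (Htt t tv) f1).
  case: (boolP (fconnect (gg (tt t)) h0 (sg (tt t) z))) => f2; last by rewrite subrr mulr0 eqxx.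
  by move=> _; have := fc_adj F4 (Htt t tv) f2; rewrite (eps_sg F4 (Htt t tv)).
have yex : forall t, trans_at v t -> exists2 e, e \in E & y t e != 0.
  move=> t tv; case: (boolP [exists e in E, y t e != 0]) => [/existsP [e /andP [eE ne]]|nex2].
    by exists e.
  exfalso; have cy : cycvec tl E (y t).
    have yz : forall e, e \in E -> y t e = 0.
      move=> e eE; apply/eqP; apply: contraNT nex2 => ne; apply/existsP; exists e; by rewrite eE.
    by split => // u; rewrite cyc_full // ybal.
  have H1 := K _ cy (yphiS t tv) h0 e0; rewrite yfl // in H1.
have [t1 t1v] := trans_exists F4 v.
have [e0' e0E ne0] := yex t1 t1v.
have [z0 [z0e c0]] := yE t1 t1v e0' ne0.
have uniqE : forall t, trans_at v t -> forall e, e \in E -> y t e != 0 -> e = e0'.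
  move=> t tv e eE ne; have [z [ze cz]] := yE t tv e ne.
  apply: (HE eE e0E ze z0e); apply: (connect_trans _ c0); by rewrite adj_sym.
have ye0 : forall t, trans_at v t -> y t e0' != 0.
  move=> t tv; have [e eE ne] := yex t tv; by rewrite -(uniqE t tv e eE ne).
have zother : forall t, trans_at v t -> forall e, e \in E -> e != e0' -> y t e = 0.
  move=> t tv e eE ne; apply/eqP; apply: contraNT ne => nz; apply/eqP; exact: (uniqE t tv e eE nz).
have all0 : forall t, trans_at v t -> phi t (y t1) = 0.
  move=> t tv; set z := lin (y t e0') (y t1) (- y t1 e0') (y t).
  have cz : cycvec tl E z.
    have zE : forall e, e \in E -> z e = 0.
      move=> e eE; rewrite /z /lin; case: (eqVneq e e0') => [->|ne].
        by rewrite mulNr mulrC subrr.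
      by rewrite (zother t tv e eE ne) (zother t1 t1v e eE ne) !mulr0 addr0.
    by split => // u; rewrite cyc_full // bal_lin !ybal // !mulr0 addr0.
  have pz : forall s, s \in S -> phi s z = 0.
    by move=> s sS; rewrite phi_lin // (yphiS t1 t1v s sS) (yphiS t tv s sS) !mulr0 addr0.
  have := Hphi t z tv cz pz; rewrite phi_lin // (yphit t tv) mulr0 addr0 => /eqP.
  by rewrite mulf_eq0 (negbTE (ye0 t tv)) /= => /eqP.
have H1 := SP e0 (ybal t1 t1v v) all0; rewrite yfl // in H1.
Qed.

End L1.

End P9.
Import P9.

Module P10.

Section Final.
Variable F : graph.
Local Notation V := (gV F).
Local Notation H := (gH F).
Hypothesis F4 : four_regular F.
Variable tl : H -> bool.
Hypothesis dir : directed tl.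
Variable o : trans F -> {set H}.
Hypothesis Ho : trans_orientation o.
Variable E : {set edge F}.
Hypothesis HE : forall e1 e2 : edge F, e1 \in E -> e2 \in E ->
  forall h1 h2 : H, h1 \in val e1 -> h2 \in val e2 ->
  connect (@adj F) (eps h1) (eps h2) -> e1 = e2.
Variable I : finType.
Variable w : I -> walk F.
Hypothesis Hw : cycle_spanning_set tl E w.
Variable r : {set trans F} -> nat.
Hypothesis Hr : is_Q r.

Local Notation ck := (ck tl o w).
Local Notation CMmx := (CMmx tl w).

Lemma T_id tau0 (Htau : forall u, trans_at u (tau0 u)) :
  (ck (Timg tau0) + #|V| + ncomp F = r (Timg tau0) + \rank CMmx + #|E|)%N.
Proof.
have [_ HQ] := Hr.
have := HQ _ (cps_partition F4 Htau); rewrite (tau_cps F4 Htau) size_cps (card_chosen F4 HE Htau).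
have := ck_dim tl o w (Timg tau0); rewrite (rank_Us_T F4 dir Ho Hw Htau).
move: (ck _) (r _) (\rank CMmx) (#|Aset _ _|) (#|E|) (#|V|) (ncomp F) => a b c d e f g.
lia.
Qed.

Lemma nc_covered (S : {set trans F}) v : ~~ covered S v -> forall t, t \in S -> ~~ trans_at v t.
Proof. move=> nc t tS; apply: contra nc => tv; apply/existsP; exists t; by rewrite tS. Qed.

Lemma r_le (S : {set trans F}) : subtransversal S -> (r S <= #|S|)%N.
Proof. move=> sub; have [[HM _] _] := Hr; have [[c _ _]] := HM S sub S S (subxx _) (subxx _); done. Qed.

Lemma r_add1 (S : {set trans F}) t : subtransversal (t |: S) -> (r (t |: S) <= (r S).+1)%N.
Proof.
move=> sub; have [[HM _] _] := Hr.
have [_ _ sm] := HM _ sub S [set t] (subsetUr _ _) (ltac:(by rewrite sub1set setU11)).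
have [c1 _ _] := HM _ sub [set t] [set t] (ltac:(by rewrite sub1set setU11)) (ltac:(by rewrite sub1set setU11)).
rewrite cards1 in c1; rewrite setUC in sm.
lia.
Qed.

Lemma r_mono (S : {set trans F}) t : subtransversal (t |: S) -> (r S <= r (t |: S))%N.
Proof.
move=> sub; have [[HM _] _] := Hr.
have [_ m _] := HM _ sub S (t |: S) (subsetUr _ _) (subxx _).
exact: m (subsetUr _ _).
Qed.

Lemma r_step (S : {set trans F}) v : subtransversal S -> ~~ covered S v ->
  exists t, trans_at v t /\ r (t |: S) = (r S).+1.
Proof.
move=> sub nc; have [[_ Hax] _] := Hr.
have [x xv] := trans_exists F4 v.
have [y [yv yx]] := trans_other F4 xv.
have lt := Hax S v y x sub (nc_covered nc) yv xv yx.
have sx := sub_add F4 sub nc xv; have sy := sub_add F4 sub nc yv.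
have a1 := r_add1 sx; have a2 := r_add1 sy; have m1 := r_mono sx; have m2 := r_mono sy.
case: (eqVneq (r (x |: S)) (r S).+1) => ex; first by exists x.
exists y; split => //.
move: lt a1 a2 m1 m2 ex; move: (r S) (r (x |: S)) (r (y |: S)) => a b c; lia.
Qed.

Lemma greedy_ck n (S : {set trans F}) : unc S = n -> subtransversal S ->
  exists T, [/\ subtransversal T, unc T = 0%N & ck T = (ck S + n)%N].
Proof.
elim: n S => [|n IH] S un sub; first by exists S; rewrite addn0.
have : (0 < unc S)%N by rewrite un.
case/card_gt0P => v; rewrite inE => nc.
have [t [tv ct]] := L1 F4 dir Ho HE Hw sub nc.
have sub' := sub_add F4 sub nc tv.
have un' : unc (t |: S) = n by rewrite (unc_add F4 nc tv) un.
have [T [sT uT cT]] := IH _ un' sub'.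
by exists T; split => //; rewrite cT ct addSnnS.
Qed.

Lemma greedy_r n (S : {set trans F}) : unc S = n -> subtransversal S ->
  exists T, [/\ subtransversal T, unc T = 0%N & r T = (r S + n)%N].
Proof.
elim: n S => [|n IH] S un sub; first by exists S; rewrite addn0.
have : (0 < unc S)%N by rewrite un.
case/card_gt0P => v; rewrite inE => nc.
have [t [tv ct]] := r_step sub nc.
have sub' := sub_add F4 sub nc tv.
have un' : unc (t |: S) = n by rewrite (unc_add F4 nc tv) un.
have [T [sT uT cT]] := IH _ un' sub'.
by exists T; split => //; rewrite cT ct addSnnS.
Qed.

Lemma sub0 : subtransversal (set0 : {set trans F}).
Proof. by apply/forallP => u; rewrite (eq_card0 (A := [set t in set0 | trans_at u t])) // => t; rewrite !inE. Qed.

Lemma unc0 : unc (set0 : {set trans F}) = #|V|.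
Proof.
rewrite /unc; apply: eq_card => u; rewrite !inE /covered; apply/negP => /existsP [t].
by rewrite inE.
Qed.

Lemma ck_card (S : {set trans F}) : (ck S <= #|S|)%N.
Proof. exact: rank_leq_col. Qed.

Lemma ck0 : ck set0 = 0%N.
Proof. apply/eqP; rewrite -leqn0; have := ck_card set0; by rewrite cards0. Qed.

Lemma delta : (\rank CMmx + #|E| = #|V| + ncomp F)%N.
Proof.
have [T0 [s0 u0 c0]] := greedy_ck unc0 sub0; rewrite ck0 add0n in c0.
have [T1 [s1 u1 c1]] := greedy_r unc0 sub0.
have r0 : r set0 = 0%N by apply/eqP; rewrite -leqn0; have := r_le sub0; rewrite cards0.
rewrite r0 add0n in c1.
have e0 := unc0_Timg F4 s0 u0; have e1 := unc0_Timg F4 s1 u1.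
have id0 := T_id (tauS_at F4 T0); rewrite -e0 in id0.
have id1 := T_id (tauS_at F4 T1); rewrite -e1 in id1.
have := r_le s0; have := subt_card s0; have := ck_card T1; have := subt_card s1.
move: id0 id1 c0 c1; move: (ck T0) (ck T1) (r T0) (r T1) (\rank CMmx) #|E| #|V| (ncomp F) #|T0| #|T1|.
move=> a b c d e f g h i j; lia.
Qed.

Lemma main_eq n (S : {set trans F}) : unc S = n -> subtransversal S -> ck S = r S.
Proof.
elim: n S => [|n IH] S un sub.
  have eS := unc0_Timg F4 sub un.
  have := T_id (tauS_at F4 S); rewrite -eS; have := delta.
  move: (ck S) (r S) (\rank CMmx) #|E| #|V| (ncomp F) => a b c d e f; lia.
have : (0 < unc S)%N by rewrite un.
case/card_gt0P => v; rewrite inE => nc.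
have [t1 [t1v c1]] := L1 F4 dir Ho HE Hw sub nc.
have [t2 [t2v c2]] := r_step sub nc.
have s1 := sub_add F4 sub nc t1v; have s2 := sub_add F4 sub nc t2v.
have u1 : unc (t1 |: S) = n by rewrite (unc_add F4 nc t1v) un.
have u2 : unc (t2 |: S) = n by rewrite (unc_add F4 nc t2v) un.
have e1 := IH _ u1 s1; have e2 := IH _ u2 s2.
have := r_add1 s1; have := ck_add1 dir o Hw S t2.
move: c1 c2 e1 e2; move: (ck S) (r S) (ck (t1 |: S)) (ck (t2 |: S)) (r (t1 |: S)) (r (t2 |: S)).
move=> a b c d e f; lia.
Qed.

Theorem final :
  represents (CMDelta tl o w) r /\
  (#|E| = ncomp F -> strict_rep (CMDelta tl o w) r).
Proof.
have eqS : forall S, subtransversal S -> crank (CMDelta tl o w) S = r S.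
  by move=> S sub; rewrite crank_ck (main_eq erefl sub).
split => // cE; rewrite /strict_rep crank_ck.
have [T1 [s1 u1 c1]] := greedy_r unc0 sub0.
have r0 : r set0 = 0%N by apply/eqP; rewrite -leqn0; have := r_le sub0; rewrite cards0.
rewrite r0 add0n in c1.
have up : (ck setT <= #|V|)%N.
  have := ck_le tl o w setT; have := delta; rewrite cE.
  move: (ck setT) (\rank CMmx) (ncomp F) #|V| => a b c d; lia.
apply/eqP; rewrite eqn_leq; apply/andP; split.
  apply: (leq_trans up); rewrite -c1; by apply: leq_bigmax_cond.
apply/bigmax_leqP => S sub; rewrite -(main_eq erefl sub); apply: (ck_mono dir o Hw); exact: subsetT.
Qed.

End Final.

End P10.
Import P10.

Theorem mainTheorem10 (F : graph) (tl : gH F -> bool) (o : trans F -> {set gH F})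
    (E : {set edge F}) (I : finType) (w : I -> walk F) :
  four_regular F ->
  directed tl ->
  trans_orientation o ->
  (forall e1 e2 : edge F, e1 \in E -> e2 \in E ->
     forall h1 h2 : gH F, h1 \in val e1 -> h2 \in val e2 ->
       connect (@adj F) (eps h1) (eps h2) -> e1 = e2) ->
  cycle_spanning_set tl E w ->
  forall r : {set trans F} -> nat, is_Q r ->
    represents (CMDelta tl o w) r /\
    (#|E| = ncomp F -> strict_rep (CMDelta tl o w) r).
Proof.
move=> F4 dir Ho HE Hw r Hr.
exact: (final F4 dir Ho HE Hw Hr).
Qed.
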